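(* Every magma satisfying $\mathrm{x}\simeq\mathrm{x}\diamond((\mathrm{y}\diamond\mathrm{z})\diamond(\mathrm{x}\diamond\mathrm{z}))$ also satisfies the right idempotence law $\mathrm{x}\diamond\mathrm{y}\simeq(\mathrm{x}\diamond\mathrm{y})\diamond\mathrm{y}$.
   Context: A magma is a set with a binary operation $\diamond$; it satisfies a law if the identity holds for all assignments of variables. *)


Theorem mainTheorem10 (M : Type) (op : M -> M -> M)
  (H : forall x y z : M, x = op x (op (op y z) (op x z))) :
  forall x y : M, op x y = op (op x y) y.
Proof.
  assert (H2 : forall x : M, x = op x (op x x)).
  { intro x.
    pose proof (H x x (op (op x x) (op x x))) as E.
    rewrite <- (H x x x) in E. exact E. }
  assert (H3 : forall x y : M, x = op x (op y (op x (op y y)))).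
  { intros x y.
    pose proof (H x y (op y y)) as E.
    rewrite <- (H2 y) in E. exact E. }
  intros x y.
  pose proof (H3 (op x y) y) as E.
  rewrite <- (H y x y) in E. exact E.
Qed.
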